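(* $\mathsf{ICK}$ is sound and complete with respect to conditional frames.
   Context: Formulas are generated by $\phi ::= p\mid\bot\mid\phi\wedge\phi\mid\phi\vee\phi\mid\phi\to\phi\mid\phi\mathrel{\Box\!\!\!\rightarrow}\phi$. $\mathsf{ICK}$ is the smallest set of formulas containing intuitionistic propositional logic, $(p\mathrel{\Box\!\!\!\rightarrow}(q\wedge r))\leftrightarrow((p\mathrel{\Box\!\!\!\rightarrow} q)\wedge(p\mathrel{\Box\!\!\!\rightarrow} r))$ and $(p\mathrel{\Box\!\!\!\rightarrow}\top)\leftrightarrow\top$, closed under uniform substitution, modus ponens, and the congruence rules for both arguments of $\mathrel{\Box\!\!\!\rightarrow}$. A conditional frame is $(X,\leq,\mathcal{R})$ with $(X,\leq)$ a nonempty preorder and $\mathcal{R}=\{R_a\mid a \text{ an upset}\}$ relations on $X$ with $(\leq\circ R_a)\subseteq(R_a\circ\leq)$ for every upset $a$. Valuations assign upsets to proposition letters; intuitionistic connectives are interpreted as in Kripke semantics, and $x\models\phi\mathrel{\Box\!\!\!\rightarrow}\psi$ iff every $y$ with $xR_{V(\phi)}y$ satisfies $\psi$, where $V(\phi)$ is the truth set of $\phi$. *)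

(* Defs.v *)
Inductive form : Type :=
| Var  : nat -> form
| Bot  : form
| And  : form -> form -> form
| Or   : form -> form -> form
| Imp  : form -> form -> form
| Cond : form -> form -> form.

Definition Top : form := Imp Bot Bot.
Definition Iff (a b : form) : form := And (Imp a b) (Imp b a).

Fixpoint subst (s : nat -> form) (f : form) : form :=
  match f with
  | Var n => s n
  | Bot => Bot
  | And a b => And (subst s a) (subst s b)
  | Or a b => Or (subst s a) (subst s b)
  | Imp a b => Imp (subst s a) (subst s b)
  | Cond a b => Cond (subst s a) (subst s b)
  end.

Inductive ipc_axiom : form -> Prop :=
| ax_K  a b     : ipc_axiom (Imp a (Imp b a))
| ax_S  a b c   : ipc_axiom (Imp (Imp a (Imp b c)) (Imp (Imp a b) (Imp a c)))
| ax_A1 a b     : ipc_axiom (Imp (And a b) a)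
| ax_A2 a b     : ipc_axiom (Imp (And a b) b)
| ax_A3 a b     : ipc_axiom (Imp a (Imp b (And a b)))
| ax_O1 a b     : ipc_axiom (Imp a (Or a b))
| ax_O2 a b     : ipc_axiom (Imp b (Or a b))
| ax_O3 a b c   : ipc_axiom (Imp (Imp a c) (Imp (Imp b c) (Imp (Or a b) c)))
| ax_EFQ a      : ipc_axiom (Imp Bot a).

(* ICK: smallest set containing IPC, the two conditional axioms (with
   proposition letters p = 0, q = 1, r = 2), closed under uniform
   substitution, modus ponens and the congruence rules. *)
Inductive ICK : form -> Prop :=
| ICK_ipc f : ipc_axiom f -> ICK f
| ICK_CM :
    ICK (Iff (Cond (Var 0) (And (Var 1) (Var 2)))
             (And (Cond (Var 0) (Var 1)) (Cond (Var 0) (Var 2))))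
| ICK_CN : ICK (Iff (Cond (Var 0) Top) Top)
| ICK_subst s f : ICK f -> ICK (subst s f)
| ICK_mp a b : ICK (Imp a b) -> ICK a -> ICK b
| ICK_congL a b c : ICK (Iff a b) -> ICK (Iff (Cond a c) (Cond b c))
| ICK_congR a b c : ICK (Iff a b) -> ICK (Iff (Cond c a) (Cond c b)).

(* Sets are predicates; relations R_a are indexed by
   sets, required to depend only on the extension of a (sets are
   extensional), and the interaction condition is imposed for upsets a. *)
Definition upset {X : Type} (le : X -> X -> Prop) (a : X -> Prop) : Prop :=
  forall x y, le x y -> a x -> a y.

Record cframe : Type := {
  cw   : Type;
  cle  : cw -> cw -> Prop;
  cR   : (cw -> Prop) -> cw -> cw -> Prop;
  cw_inhabited : inhabited cw;
  cle_refl  : forall x, cle x x;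
  cle_trans : forall x y z, cle x y -> cle y z -> cle x z;
  cR_ext : forall a b : cw -> Prop, (forall x, a x <-> b x) ->
           forall x y, cR a x y <-> cR b x y;
  cR_comp : forall a : cw -> Prop, upset cle a ->
           forall x y z, cle x y -> cR a y z -> exists w, cR a x w /\ cle w z
}.

Fixpoint sat (F : cframe) (V : nat -> cw F -> Prop) (x : cw F) (f : form)
  : Prop :=
  match f with
  | Var n => V n x
  | Bot => False
  | And a b => sat F V x a /\ sat F V x b
  | Or a b => sat F V x a \/ sat F V x b
  | Imp a b => forall y, cle F x y -> sat F V y a -> sat F V y b
  | Cond a b => forall y, cR F (fun z => sat F V z a) x y -> sat F V y b
  end.

Definition cvalid (f : form) : Prop :=
  forall (F : cframe) (V : nat -> cw F -> Prop),
    (forall n, upset (cle F) (V n)) -> forall x, sat F V x f.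

(* Main.v *)
Require Import Defs.
From Stdlib Require Import Classical Cantor Lia.

Lemma persist F V (HV : forall n, upset (cle F) (V n)) f :
  forall x y, cle F x y -> sat F V x f -> sat F V y f.
Proof.
  induction f; simpl; intros x y Hxy Hx.
  - exact (HV n x y Hxy Hx).
  - exact Hx.
  - destruct Hx; split; eauto.
  - destruct Hx; [left|right]; eauto.
  - intros z Hyz Hz. apply Hx; auto. eapply cle_trans; eauto.
  - intros z Hyz.
    destruct (cR_comp F (fun z => sat F V z f1) IHf1 x y z Hxy Hyz) as [w [Hxw Hwz]].
    eapply IHf2; [exact Hwz|]. apply Hx; exact Hxw.
Qed.

Lemma sat_subst F V s f : forall x,
  sat F V x (subst s f) <-> sat F (fun n y => sat F V y (s n)) x f.
Proof.
  induction f; simpl; intros x.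
  - tauto.
  - tauto.
  - rewrite IHf1, IHf2; tauto.
  - rewrite IHf1, IHf2; tauto.
  - split; intros H y Hxy Hy.
    + apply IHf2. apply H; auto. apply IHf1; auto.
    + apply IHf2. apply H; auto. apply IHf1; auto.
  - split; intros H y Hxy.
    + apply IHf2. apply H.
      apply (cR_ext F (fun z => sat F V z (subst s f1))
                       (fun z => sat F (fun n y0 => sat F V y0 (s n)) z f1)); auto.
    + apply IHf2. apply H.
      apply (cR_ext F (fun z => sat F V z (subst s f1))
                       (fun z => sat F (fun n y0 => sat F V y0 (s n)) z f1)); auto.
Qed.

Lemma ipc_sound F V (HV : forall n, upset (cle F) (V n)) f :
  ipc_axiom f -> forall x, sat F V x f.
Proof.
  pose proof (persist F V HV) as P.
  pose proof (cle_refl F) as Rf.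
  pose proof (cle_trans F) as Tr.
  intros H; destruct H; simpl; intros x.
  - intros y _ Ha z Hyz _. eauto.
  - intros y _ H1 z Hyz H2 w Hzw Ha.
    apply (H1 w (Tr _ _ _ Hyz Hzw) Ha w (Rf w) (H2 w Hzw Ha)).
  - intros y _ [? ?]; auto.
  - intros y _ [? ?]; auto.
  - intros y _ Ha z Hyz Hb. split; eauto.
  - intros y _ Ha; auto.
  - intros y _ Ha; auto.
  - intros y _ H1 z Hyz H2 w Hzw [Ha|Hb].
    + apply H1; eauto.
    + apply H2; eauto.
  - intros y _ [].
Qed.

Lemma soundness f : ICK f -> cvalid f.
Proof.
  intros H; induction H; intros F V HV x.
  - apply ipc_sound; auto.
  - simpl. split.
    + intros y _ H. split; intros z Hz; apply H; auto.
    + intros y _ [H1 H2] z Hz. split; [apply H1|apply H2]; auto.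
  - simpl. split.
    + intros y _ _ z _ [].
    + intros y _ _ z _ w _ [].
  - apply sat_subst. apply IHICK.
    intros n. intros u v Huv Hu. eapply persist; eauto.
  - pose proof (IHICK1 F V HV x) as H1. simpl in H1.
    apply (H1 x (cle_refl F x)). apply IHICK2; auto.
  - assert (E : forall y, sat F V y a <-> sat F V y b).
    { intros y. pose proof (IHICK F V HV y) as [H1 H2]. simpl in H1, H2.
      split; [apply H1|apply H2]; apply cle_refl. }
    simpl. split.
    + intros y _ Hy z Hz. apply Hy.
      apply (cR_ext F (fun z => sat F V z a) (fun z => sat F V z b) E); auto.
    + intros y _ Hy z Hz. apply Hy.
      apply (cR_ext F (fun z => sat F V z a) (fun z => sat F V z b) E); auto.
  - assert (E : forall y, sat F V y a <-> sat F V y b).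
    { intros y. pose proof (IHICK F V HV y) as [H1 H2]. simpl in H1, H2.
      split; [apply H1|apply H2]; apply cle_refl. }
    simpl. split; intros y _ Hy z Hz; apply E; auto.
Qed.

Inductive Der (G : form -> Prop) : form -> Prop :=
| D_ax f : ICK f -> Der G f
| D_hyp f : G f -> Der G f
| D_mp a b : Der G (Imp a b) -> Der G a -> Der G b.

Lemma Der_mono (G H : form -> Prop) f :
  (forall x, G x -> H x) -> Der G f -> Der H f.
Proof.
  intros GH D; induction D.
  - apply D_ax; auto.
  - apply D_hyp; auto.
  - eapply D_mp; eauto.
Qed.

Lemma ICK_id a : ICK (Imp a a).
Proof.
  eapply ICK_mp. eapply ICK_mp. apply ICK_ipc. apply (ax_S a (Imp a a) a).
  apply ICK_ipc, ax_K. apply ICK_ipc, ax_K.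
Qed.

Lemma deduction G a b :
  Der (fun x => G x \/ x = a) b -> Der G (Imp a b).
Proof.
  intros D; induction D.
  - eapply D_mp. apply D_ax, ICK_ipc, ax_K. apply D_ax; auto.
  - destruct H as [H|H].
    + eapply D_mp. apply D_ax, ICK_ipc, ax_K. apply D_hyp; auto.
    + subst. apply D_ax, ICK_id.
  - eapply D_mp. eapply D_mp. apply D_ax, ICK_ipc, ax_S. eauto. eauto.
Qed.

Definition Emp : form -> Prop := fun _ => False.

Lemma Der_Emp f : Der Emp f -> ICK f.
Proof.
  intros D; induction D; auto. destruct H. eapply ICK_mp; eauto.
Qed.

Lemma Der_cut G a b : Der G a -> Der (fun x => G x \/ x = a) b -> Der G b.
Proof.
  intros Ha Hb. eapply D_mp. apply deduction; eauto. auto.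
Qed.

Record ptheory (T : form -> Prop) : Prop := {
  pt_closed : forall f, Der T f -> T f;
  pt_prime : forall a b, T (Or a b) -> T a \/ T b;
  pt_cons : ~ T Bot
}.

Fixpoint code (f : form) : nat :=
  match f with
  | Var n => to_nat (0, n)
  | Bot => to_nat (1, 0)
  | And a b => to_nat (2, to_nat (code a, code b))
  | Or a b => to_nat (3, to_nat (code a, code b))
  | Imp a b => to_nat (4, to_nat (code a, code b))
  | Cond a b => to_nat (5, to_nat (code a, code b))
  end.

Lemma to_nat_inj p q : to_nat p = to_nat q -> p = q.
Proof.
  intros H. rewrite <- (cancel_of_to p), <- (cancel_of_to q), H. reflexivity.
Qed.

Lemma code_inj f g : code f = code g -> f = g.
Proof.
  revert g; induction f; destruct g; cbn [code]; intros H;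
    apply to_nat_inj in H; try discriminate H; try reflexivity;
    apply (f_equal snd) in H; cbn [snd] in H; try (subst; reflexivity);
    apply to_nat_inj in H;
    pose proof (f_equal fst H) as Ha; pose proof (f_equal snd H) as Hb;
    cbn [fst snd] in Ha, Hb; f_equal; auto.
Qed.

Section Lind.
Variable G : form -> Prop.
Variable phi : form.

Fixpoint stage (n : nat) : form -> Prop :=
  match n with
  | 0 => G
  | S n => fun psi => stage n psi \/
           (code psi = n /\ ~ Der (fun x => stage n x \/ x = psi) phi)
  end.

Definition Lim : form -> Prop := fun psi => exists n, stage n psi.

Lemma stage_mono n m : n <= m -> forall x, stage n x -> stage m x.
Proof.
  induction 1; auto. intros x Hx. simpl. left; auto.
Qed.

Lemma stage_G x : G x -> Lim x.
Proof. intros; exists 0; auto. Qed.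

Lemma Lim_compact f : Der Lim f -> exists n, Der (stage n) f.
Proof.
  intros D; induction D.
  - exists 0; apply D_ax; auto.
  - destruct H as [n Hn]; exists n; apply D_hyp; auto.
  - destruct IHD1 as [n1 H1], IHD2 as [n2 H2].
    exists (max n1 n2). eapply D_mp.
    + eapply Der_mono; [|exact H1]. apply stage_mono; lia.
    + eapply Der_mono; [|exact H2]. apply stage_mono; lia.
Qed.

Hypothesis H0 : ~ Der G phi.

Lemma stage_ok n : ~ Der (stage n) phi.
Proof.
  induction n; simpl; auto.
  destruct (classic (exists psi, code psi = n /\
              ~ Der (fun x => stage n x \/ x = psi) phi)) as [[psi [Hc Hn]]|Hno].
  - intros D. apply Hn. eapply Der_mono; [|exact D].
    intros x [Hx|[Hx Hd]]; auto. right. apply code_inj; congruence.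
  - intros D. apply IHn. eapply Der_mono; [|exact D].
    intros x [Hx|[Hx Hd]]; auto. exfalso; apply Hno; eauto.
Qed.

Lemma Lim_ok : ~ Der Lim phi.
Proof.
  intros D. destruct (Lim_compact _ D) as [n Hn]. exact (stage_ok n Hn).
Qed.

Lemma Lim_max psi : ~ Lim psi -> Der (fun x => Lim x \/ x = psi) phi.
Proof.
  intros Hp. destruct (classic (Der (fun x => stage (code psi) x \/ x = psi) phi)) as [D|D].
  - eapply Der_mono; [|exact D]. intros x [Hx|Hx]; [left; exists (code psi)|right]; auto.
  - exfalso. apply Hp. exists (S (code psi)). simpl. right; auto.
Qed.

Lemma Lim_closed f : Der Lim f -> Lim f.
Proof.
  intros D. apply NNPP; intros Hf. apply Lim_ok. eapply Der_cut; eauto. apply Lim_max; auto.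
Qed.

Lemma Lim_ptheory : ptheory Lim.
Proof.
  split.
  - apply Lim_closed.
  - intros a b Hab. apply NNPP; intros Hn.
    apply Lim_ok.
    assert (Ha : Der Lim (Imp a phi)) by (apply deduction, Lim_max; tauto).
    assert (Hb : Der Lim (Imp b phi)) by (apply deduction, Lim_max; tauto).
    eapply D_mp; [|apply D_hyp; exact Hab].
    eapply D_mp; [|exact Hb]. eapply D_mp; [|exact Ha]. apply D_ax, ICK_ipc, ax_O3.
  - intros Hb. apply Lim_ok. eapply D_mp. apply D_ax, ICK_ipc, ax_EFQ. apply D_hyp; auto.
Qed.

End Lind.

Lemma lindenbaum G phi : ~ Der G phi ->
  exists D, ptheory D /\ (forall x, G x -> D x) /\ ~ D phi.
Proof.
  intros H. exists (Lim G phi). split; [apply Lim_ptheory; auto|]. split.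
  - apply stage_G.
  - intros Hl. apply (Lim_ok G phi H). apply D_hyp; auto.
Qed.

Definition PT := { T : form -> Prop | ptheory T }.
Definition ple (x y : PT) : Prop := forall f, proj1_sig x f -> proj1_sig y f.
Definition pR (a : PT -> Prop) (x y : PT) : Prop :=
  exists p, (forall t, a t <-> proj1_sig t p) /\
            forall q, proj1_sig x (Cond p q) -> proj1_sig y q.

Lemma ICK_not_Bot : ~ ICK Bot.
Proof.
  intros H. apply soundness in H.
  set (F := {| cw := unit; cle := fun _ _ => True; cR := fun _ _ _ => False;
               cw_inhabited := inhabits tt;
               cle_refl := fun _ => I;
               cle_trans := fun _ _ _ _ _ => I;
               cR_ext := fun a b _ x y => conj (fun h => h) (fun h => h);
               cR_comp := fun a _ x y z _ (h : False) => match h with end |}).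
  exact (H F (fun _ _ => True) (fun _ _ _ _ _ => I) tt).
Qed.

Lemma PT_inh : inhabited PT.
Proof.
  destruct (lindenbaum Emp Bot) as [D [HD _]].
  - intros H; apply ICK_not_Bot, Der_Emp; auto.
  - constructor. exact (exist _ D HD).
Qed.

Lemma pR_ext (a b : PT -> Prop) : (forall x, a x <-> b x) ->
  forall x y, pR a x y <-> pR b x y.
Proof.
  intros E x y; unfold pR; split; intros [p [Hp Hq]]; exists p; split; auto;
  intros t; rewrite <- Hp; auto; rewrite E; tauto.
Qed.

Lemma pR_comp (a : PT -> Prop) : upset ple a ->
  forall x y z, ple x y -> pR a y z -> exists w, pR a x w /\ ple w z.
Proof.
  intros _ x y z Hxy [p [Hp Hq]]. exists z. split.
  - exists p; split; auto.
  - intros f; auto.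
Qed.

Definition CF : cframe :=
  {| cw := PT; cle := ple; cR := pR; cw_inhabited := PT_inh;
     cle_refl := fun x f h => h;
     cle_trans := fun x y z h1 h2 f h => h2 f (h1 f h);
     cR_ext := pR_ext; cR_comp := pR_comp |}.

Definition CV : nat -> PT -> Prop := fun n t => proj1_sig t (Var n).

Lemma T_ICK (t : PT) f : ICK f -> proj1_sig t f.
Proof. intros H. apply (pt_closed _ (proj2_sig t)). apply D_ax; auto. Qed.

Lemma T_mp (t : PT) a b : proj1_sig t (Imp a b) -> proj1_sig t a -> proj1_sig t b.
Proof.
  intros H1 H2. apply (pt_closed _ (proj2_sig t)). eapply D_mp; apply D_hyp; eauto.
Qed.

Lemma ICK_of_Der1 a b : Der (fun x => Emp x \/ x = a) b -> ICK (Imp a b).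
Proof. intros H. apply Der_Emp, deduction; auto. Qed.

Lemma ICK_and a b : ICK a -> ICK b -> ICK (And a b).
Proof.
  intros Ha Hb. apply (ICK_mp b); [|exact Hb]. apply (ICK_mp a); [|exact Ha]. apply ICK_ipc, ax_A3.
Qed.

Lemma ICK_CM_inst a c d :
  ICK (Iff (Cond a (And c d)) (And (Cond a c) (Cond a d))).
Proof.
  exact (ICK_subst (fun n => match n with 0 => a | 1 => c | _ => d end) _ ICK_CM).
Qed.

Lemma ICK_iffL a b : ICK (Iff a b) -> ICK (Imp a b).
Proof. intros H. eapply ICK_mp; [apply ICK_ipc, ax_A1|exact H]. Qed.
Lemma ICK_iffR a b : ICK (Iff a b) -> ICK (Imp b a).
Proof. intros H. eapply ICK_mp; [apply ICK_ipc, ax_A2|exact H]. Qed.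

Lemma cond_conj (t : PT) a c d :
  proj1_sig t (Cond a c) -> proj1_sig t (Cond a d) -> proj1_sig t (Cond a (And c d)).
Proof.
  intros H1 H2. eapply T_mp. apply T_ICK, ICK_iffR, ICK_CM_inst.
  apply (T_mp _ (Cond a d)); [|exact H2]. apply (T_mp _ (Cond a c)); [|exact H1].
  apply T_ICK, ICK_ipc, ax_A3.
Qed.

Lemma cond_mono (t : PT) a c d :
  ICK (Imp c d) -> proj1_sig t (Cond a c) -> proj1_sig t (Cond a d).
Proof.
  intros Hcd H.
  assert (E : ICK (Iff c (And c d))).
  { apply ICK_and.
    - apply ICK_of_Der1. eapply D_mp; [eapply D_mp|].
      apply D_ax, ICK_ipc, ax_A3. apply D_hyp; auto.
      eapply D_mp. apply D_ax; exact Hcd. apply D_hyp; auto.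
    - apply ICK_ipc, ax_A1. }
  apply (ICK_congR _ _ a) in E.
  assert (H2 : proj1_sig t (Cond a (And c d))) by (eapply T_mp; [apply T_ICK, ICK_iffL, E|auto]).
  assert (H3 : proj1_sig t (And (Cond a c) (Cond a d)))
    by (eapply T_mp; [apply T_ICK, ICK_iffL, ICK_CM_inst|auto]).
  eapply T_mp; [apply T_ICK, ICK_ipc, ax_A2|exact H3].
Qed.

Lemma cond_top (t : PT) a : proj1_sig t (Cond a Top).
Proof.
  apply T_ICK. pose proof (ICK_subst (fun _ => a) _ ICK_CN) as H. simpl in H.
  eapply ICK_mp. apply (ICK_iffR _ _ H). apply ICK_id.
Qed.

Lemma truth f : forall t : PT, sat CF CV t f <-> proj1_sig t f.
Proof.
  induction f; intros t; simpl.
  - unfold CV; tauto.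
  - split; [tauto|]. intros H. apply (pt_cons _ (proj2_sig t) H).
  - rewrite IHf1, IHf2. split.
    + intros [H1 H2]. apply (T_mp _ f2); [|exact H2]. apply (T_mp _ f1); [|exact H1].
      apply T_ICK, ICK_ipc, ax_A3.
    + intros H; split; (eapply T_mp; [|exact H]); apply T_ICK, ICK_ipc; constructor.
  - rewrite IHf1, IHf2. split.
    + intros [H|H]; (eapply T_mp; [|exact H]); apply T_ICK, ICK_ipc; constructor.
    + apply (pt_prime _ (proj2_sig t)).
  - split.
    + intros H. apply NNPP; intros Hn.
      assert (ND : ~ Der (fun x => proj1_sig t x \/ x = f1) f2).
      { intros D. apply Hn. apply (pt_closed _ (proj2_sig t)). apply deduction; auto. }
      destruct (lindenbaum _ _ ND) as [D [HD [Hsub Hnot]]].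
      set (d := exist _ D HD : PT).
      assert (Hle : ple t d) by (intros g Hg; apply Hsub; auto).
      apply Hnot. apply (IHf2 d). apply H; [exact Hle|]. apply IHf1. apply Hsub; auto.
    + intros H y Hy Ha. apply IHf2. apply IHf1 in Ha. apply (T_mp _ f1); [apply Hy; auto|exact Ha].
  - split.
    + intros H. apply NNPP; intros Hn.
      set (T := fun q => proj1_sig t (Cond f1 q)).
      assert (ND : ~ Der T f2).
      { intros D. apply Hn. clear - D. induction D.
        - eapply cond_mono; [|apply cond_top].
          apply ICK_of_Der1. apply D_ax; auto.
        - auto.
        - eapply cond_mono; [|apply (cond_conj _ _ _ _ IHD1 IHD2)].
          apply ICK_of_Der1. eapply D_mp.
          + eapply D_mp; [apply D_ax, ICK_ipc, ax_A1|apply D_hyp; auto].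
          + eapply D_mp; [apply D_ax, ICK_ipc, ax_A2|apply D_hyp; auto]. }
      destruct (lindenbaum _ _ ND) as [D [HD [Hsub Hnot]]].
      set (d := exist _ D HD : PT).
      apply Hnot. apply (IHf2 d). apply H.
      exists f1. split; [intros s; apply IHf1|]. intros q Hq; apply Hsub; auto.
    + intros H y [p [Hp Hq]]. apply IHf2. apply Hq.
      assert (E1 : ICK (Imp f1 p)).
      { apply NNPP; intros Hn.
        assert (ND : ~ Der (fun x => Emp x \/ x = f1) p) by (intros D; apply Hn, ICK_of_Der1; auto).
        destruct (lindenbaum _ _ ND) as [D [HD [Hsub Hnot]]].
        apply Hnot. apply (Hp (exist _ D HD)). apply IHf1. apply Hsub; auto. }
      assert (E2 : ICK (Imp p f1)).
      { apply NNPP; intros Hn.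
        assert (ND : ~ Der (fun x => Emp x \/ x = p) f1) by (intros D; apply Hn, ICK_of_Der1; auto).
        destruct (lindenbaum _ _ ND) as [D [HD [Hsub Hnot]]].
        apply Hnot. apply (IHf1 (exist _ D HD)). apply Hp. apply Hsub; auto. }
      pose proof (ICK_congL _ _ f2 (ICK_and _ _ E1 E2)) as E.
      eapply T_mp; [apply T_ICK, ICK_iffL, E|exact H].
Qed.

Lemma completeness f : cvalid f -> ICK f.
Proof.
  intros H. apply NNPP; intros Hn.
  assert (ND : ~ Der Emp f) by (intros D; apply Hn, Der_Emp; auto).
  destruct (lindenbaum _ _ ND) as [D [HD [_ Hnot]]].
  apply Hnot. apply (truth f (exist _ D HD)). apply H.
  intros n x y Hxy Hx. apply Hxy; exact Hx.
Qed.

Theorem theorem4p26 : forall f : form, ICK f <-> cvalid f.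
Proof.
  intros f; split; [apply soundness|apply completeness].
Qed.
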